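(* Let $G$ and $G'$ be finite undirected graphs with initial node features $x_v$ (for $v\in V(G)$) and $x'_{v'}$ (for $v'\in V(G')$), and suppose that the one-dimensional Weisfeiler–Lehman test (1-WL), initialized with colors given by the node features, does not distinguish $G$ and $G'$, i.e. at every iteration the multisets of node colors of $G$ and $G'$ coincide. Consider any message-passing GNN with layers \[ h_v^{(\ell+1)}=\sigma\Bigl(\mathrm{AGG}\bigl\{\!\!\{\phi_\ell(h_v^{(\ell)},h_u^{(\ell)},e_{uv}) : u\in\mathcal N(v)\}\!\!\}\bigr)\Bigr),\qquad h_v^{(0)}=x_v, \] where $\mathrm{AGG}$ is any permutation-invariant function of multisets, $\phi_\ell,\sigma$ are arbitrary functions, and the edge feature is the degree-based Forman curvature $e_{uv}=F(u,v)=4-\deg(u)-\deg(v)$. Then for every number of layers $L\ge 0$, the multisets $\{\!\!\{h_v^{(L)}:v\in V(G)\}\!\!\}$ and $\{\!\!\{h_{v'}^{(L)}:v'\in V(G')\}\!\!\}$ coincide; in particular, no such GNN (with any permutation-invariant graph-level readout) distinguishes $G$ and $G'$. That is, such GNNs are no more expressive than 1-WL.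
   Context: 1-WL: starting from initial colors, each iteration replaces the color of node $v$ by an injective encoding of the pair (current color of $v$, multiset of current colors of neighbors of $v$). Two graphs are distinguished by 1-WL if at some iteration their multisets of node colors differ. $\mathcal N(v)$ is the set of neighbors of $v$, and $\{\!\!\{\cdot\}\!\!\}$ denotes a multiset. *)

(* Defs.v *)
From mathcomp Require Import all_boot all_order all_algebra.
From Stdlib Require Import Permutation.
Set Implicit Arguments. Unset Strict Implicit. Unset Printing Implicit Defensive.
Import GRing.Theory Num.Theory.

Definition undirected (V : finType) (e : rel V) : Prop :=
  symmetric e /\ irreflexive e.

Definition deg (V : finType) (e : rel V) (v : V) : nat := #|[pred u | e v u]|.

Definition forman (V : finType) (e : rel V) (u v : V) : int :=
  (4%:Z - (deg e u)%:Z - (deg e v)%:Z)%R.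

(* The multiset of messages is given as a sequence (listing neighbours in the
   order of enum V); agg is required to be permutation invariant in the theorem. *)
Fixpoint gnn (V : finType) (e : rel V) (T M A : Type) (x : V -> T)
    (phi : nat -> T -> T -> int -> M) (agg : seq M -> A) (sigma : A -> T)
    (l : nat) : V -> T :=
  match l with
  | 0 => x
  | l'.+1 => fun v =>
      sigma (agg [seq phi l' (gnn e x phi agg sigma l' v)
                             (gnn e x phi agg sigma l' u) (forman e u v)
                 | u <- enum V & e v u])
  end.

(* 1-WL on a graph W with initial colors c, presented through the equivalence
   "a and b have the same color at iteration k" (this is exactly what an
   injective encoding of (color, multiset of neighbour colors) yields):
   same color at k+1 iff same color at k and, for every color class d at
   iteration k, the same number of neighbours in that class. *)
Fixpoint wl_same (W : finType) (e : rel W) (X : eqType) (c : W -> X) (k : nat)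
    : rel W :=
  match k with
  | 0 => fun a b => c a == c b
  | k'.+1 => fun a b =>
      wl_same e c k' a b &&
      [forall d, #|[pred u | e a u & wl_same e c k' u d]|
                 == #|[pred u | e b u & wl_same e c k' u d]|]
  end.

(* Disjoint union of two graphs, so that both are colored by one common
   (injective) encoding. *)
Definition union_adj (V V' : finType) (e : rel V) (e' : rel V') : rel (V + V') :=
  fun a b => match a, b with
             | inl v, inl u => e v u
             | inr v, inr u => e' v u
             | _, _ => false
             end.

Definition union_col (V V' : finType) (X : Type) (x : V -> X) (x' : V' -> X)
    (a : V + V') : X :=
  match a with inl v => x v | inr v => x' v end.

(* 1-WL does not distinguish (G,x) and (G',x'): at every iteration k, for every
   color (class of a node d of either graph), both graphs have the same number of
   nodes with that color, i.e. the multisets of node colors coincide. *)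
Definition wl_indist (V V' : finType) (e : rel V) (e' : rel V') (X : eqType)
    (x : V -> X) (x' : V' -> X) : Prop :=
  forall (k : nat) (d : V + V'),
    #|[pred v : V | wl_same (union_adj e e') (union_col x x') k (inl v) d]|
    = #|[pred v : V' | wl_same (union_adj e e') (union_col x x') k (inr v) d]|.

(* Main.v *)
Require Import Defs.
From mathcomp Require Import all_boot all_order all_algebra.
From Stdlib Require Import Permutation.
Set Implicit Arguments. Unset Strict Implicit. Unset Printing Implicit Defensive.
Lemma cnt (V : finType) (p : pred V) : count p (enum V) = #|p|.
Proof. by rewrite cardE /enum_mem size_filter count_filter; apply: eq_count => x; rewrite !inE andbT. Qed.
Lemma cnt' (V : finType) (p : pred V) : count p (Finite.enum V) = #|p|.
Proof. rewrite -enumT. exact: cnt. Qed.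

Lemma p2P (T : eqType) (M : Type) (g : T -> M) (s t : seq T) :
  perm_eq s t -> Permutation (map g s) (map g t).
Proof.
elim: s t => [|a s IH] t.
  by rewrite perm_sym => /perm_nilP ->.
move=> pst; have Ha : a \in t by rewrite -(perm_mem pst) mem_head.
move: pst; case/splitPr: Ha => t1 t2 pst.
have H1 : perm_eq (t1 ++ a :: t2) (a :: (t1 ++ t2)) by rewrite -cat1s perm_catCA.
have := seq.perm_trans pst H1; rewrite perm_cons => /IH.
rewrite map_cat /= => H.
rewrite map_cat /=; apply: Permutation_trans (Permutation_middle _ _ _); by constructor.
Qed.

Lemma classcount (W : finType) (R : rel W) (Rref : reflexive R)
  (Rsym : symmetric R) (Rtr : transitive R) (P Q : pred W)
  (H : forall d, #|[pred u | P u & R u d]| = #|[pred u | Q u & R u d]|) :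
  forall n (S : {set W}), #|S| <= n ->
  (forall u v, R u v -> (u \in S) = (v \in S)) ->
  #|[pred u | P u & u \in S]| = #|[pred u | Q u & u \in S]|.
Proof.
elim=> [|n IH] S.
  rewrite leqn0 => /eqP /cards0_eq -> _.
  by rewrite !eq_card0 // => u; rewrite !inE andbF.
move=> cS clS.
have [->|[d dS]] := set_0Vmem S.
  by rewrite !eq_card0 // => u; rewrite !inE andbF.
set S' := S :\: [set u | R u d].
have cS' : #|S'| <= n.
  rewrite -ltnS; apply: leq_trans cS; apply: proper_card.
  apply/properP; split; first exact: subsetDl.
  by exists d => //; rewrite !inE Rref.
have clS' : forall u v, R u v -> (u \in S') = (v \in S').
  move=> u v Ruv; rewrite !inE (clS u v Ruv).
  have -> : R u d = R v d.
    apply/idP/idP => [|Rvd]; first by apply: Rtr; rewrite Rsym.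
    exact: Rtr Ruv Rvd.
  by [].
have IH' := IH S' cS' clS'.
have hsplit : forall X : pred W, #|[pred u | X u & u \in S]| =
   #|[pred u | X u & R u d]| + #|[pred u | X u & u \in S']|.
  move=> X; rewrite -(cardID [pred u | R u d]); congr (_ + _); apply: eq_card => u; rewrite !inE.
    case Rud: (R u d); rewrite ?andbT ?andbF //; by rewrite (clS u d Rud) dS andbT.
  by case: (R u d); case: (X u).
by rewrite !hsplit H IH'.
Qed.

Lemma wl_equiv (W : finType) (E : rel W) (X : eqType) (c : W -> X) k :
  [/\ reflexive (wl_same E c k), symmetric (wl_same E c k) & transitive (wl_same E c k)].
Proof.
elim: k => [|k [r s t]] /=.
  split => [a|a b|b a d] /=; [by [] | exact: eq_sym | by move/eqP => ->].
split.
- by move=> a; rewrite r; apply/forallP => d.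
- move=> a b; rewrite s; congr (_ && _); apply/forallP/forallP => H d; by rewrite eq_sym H.
- move=> b a d /andP [ab /forallP Hab] /andP [bd /forallP Hbd].
  rewrite (t _ _ _ ab bd); apply/forallP => z.
  by rewrite (eqP (Hab z)) (eqP (Hbd z)).
Qed.

Lemma wl_deg (W : finType) (E : rel W) (X : eqType) (c : W -> X) k a b :
  wl_same E c k.+1 a b -> deg E a = deg E b.
Proof.
move=> Hab.
have H : forall d, #|[pred u | E a u & wl_same E c k u d]| = #|[pred u | E b u & wl_same E c k u d]|.
  by move: Hab => /andP [_ /forallP H] d; exact/eqP/(H d).
have [r s t] := wl_equiv E c k.
have := classcount r s t H (n := #|W|) (S := setT) (max_card _) (fun u v _ => ltac:(by rewrite !inE)).
rewrite /deg => Hc.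
transitivity #|[pred u | E a u & u \in [set: W]]|; first by apply: eq_card => u; rewrite !inE andbT.
rewrite Hc; by apply: eq_card => u; rewrite !inE andbT.
Qed.

Lemma cardl (V V' : finType) (P : pred V) :
  #|[pred w : V + V' | if w is inl u then P u else false]| = #|P|.
Proof.
have inj : injective (@inl V V') by move=> ? ? [].
rewrite -(card_image inj); apply: eq_card => -[u|u]; rewrite !inE.
  by rewrite mem_image.
by apply/esym/negbTE/imageP => -[].
Qed.

Lemma cardr (V V' : finType) (P : pred V') :
  #|[pred w : V + V' | if w is inr u then P u else false]| = #|P|.
Proof.
have inj : injective (@inr V V') by move=> ? ? [].
rewrite -(card_image inj); apply: eq_card => -[u|u]; rewrite !inE.
  by apply/esym/negbTE/imageP => -[].
by rewrite mem_image.
Qed.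

Lemma deg_inl (V V' : finType) (e : rel V) (e' : rel V') v :
  deg (union_adj e e') (inl v) = deg e v.
Proof. by rewrite /deg -(cardl V' [pred u | e v u]); apply: eq_card => -[u|u]. Qed.

Lemma deg_inr (V V' : finType) (e : rel V) (e' : rel V') v :
  deg (union_adj e e') (inr v) = deg e' v.
Proof. by rewrite /deg -(cardr V [pred u | e' v u]); apply: eq_card => -[u|u]. Qed.

Unset Implicit Arguments.
Theorem theorem4p1 (V V' : finType) (e : rel V) (e' : rel V')
  (T : eqType) (M A : Type) (x : V -> T) (x' : V' -> T)
  (phi : nat -> T -> T -> int -> M) (agg : seq M -> A) (sigma : A -> T) :
  undirected e -> undirected e' ->
  (forall s t : seq M, Permutation s t -> agg s = agg t) ->
  wl_indist e e' x x' ->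
  forall L : nat,
    perm_eq [seq gnn e x phi agg sigma L v | v <- enum V]
            [seq gnn e' x' phi agg sigma L v | v <- enum V'].
Proof.
move=> _ _ aggP wlI L.
set E := union_adj e e'; set c := union_col x x'.
pose hU k (a : V + V') := match a with inl v => gnn e x phi agg sigma k v
                                     | inr v => gnn e' x' phi agg sigma k v end.
pose ms k (a : V + V') : seq (T * int) := match a with
  | inl v => [seq (gnn e x phi agg sigma k u, forman e u v) | u <- enum V & e v u]
  | inr v => [seq (gnn e' x' phi agg sigma k u, forman e' u v) | u <- enum V' & e' v u] end.
have F1 k a : hU k.+1 a = sigma (agg (map (fun p => phi k (hU k a) p.1 p.2) (ms k a))).
  by case: a => v /=; rewrite -map_comp.
have F3 k a (p : pred (T * int)) :
    count p (ms k a) = #|[pred w | E a w & p (hU k w, forman E w a)]|.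
  case: a => v /=; rewrite count_map count_filter; (apply: etrans; first exact: cnt).
    rewrite -(cardl V' [pred u | p (gnn e x phi agg sigma k u, forman e u v) && e v u]).
    apply: eq_card => -[u|u] //=; rewrite !inE /= andbC /forman !deg_inl //.
  rewrite -(cardr V [pred u | p (gnn e' x' phi agg sigma k u, forman e' u v) && e' v u]).
  apply: eq_card => -[u|u] //=; rewrite !inE /= andbC /forman !deg_inr //.
have G k : forall a b, wl_same E c k.+1 a b -> hU k a = hU k b.
  elim: k => [|k IH] a b.
    by move=> /andP [/eqP Hc _]; case: a b Hc => [v|v] [u|u].
  move=> Hab; rewrite !F1.
  have hab : hU k a = hU k b by apply: IH; case/andP: Hab.
  have dab : deg E a = deg E b by exact: wl_deg Hab.
  rewrite hab; congr sigma; apply: aggP; apply: p2P; apply/permP => p.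
  rewrite !F3.
  have H : forall d, #|[pred u | E a u & wl_same E c k.+1 u d]| = #|[pred u | E b u & wl_same E c k.+1 u d]|.
    by move: Hab => /andP [_ /forallP H] d; exact/eqP/(H d).
  have [r s t] := wl_equiv E c k.+1.
  have cl : forall u v, wl_same E c k.+1 u v ->
     (u \in [set w | p (hU k w, forman E w b)]) = (v \in [set w | p (hU k w, forman E w b)]).
    by move=> u v Huv; rewrite !inE /forman (IH u v Huv) (wl_deg Huv).
  have := classcount r s t H (max_card _) cl.
  have ff : forall w, forman E w a = forman E w b by move=> w; rewrite /forman dab.
  move=> Hc; transitivity #|[pred u | E a u & u \in [set w | p (hU k w, forman E w b)]]|.
    by apply: eq_card => u; rewrite !inE ff.
  by rewrite Hc; apply: eq_card => u; rewrite !inE.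
apply/permP => p; rewrite !count_map.
apply: etrans; first exact: cnt'.
apply: esym; apply: etrans; first exact: cnt'.
apply: esym.
pose isl (w : V + V') := if w is inl _ then true else false.
pose isr (w : V + V') := if w is inr _ then true else false.
have [r s t] := wl_equiv E c L.+1.
have H : forall d, #|[pred u | isl u & wl_same E c L.+1 u d]| = #|[pred u | isr u & wl_same E c L.+1 u d]|.
  move=> d; transitivity #|[pred v : V | wl_same E c L.+1 (inl v) d]|.
    by rewrite -(cardl V' [pred v : V | wl_same E c L.+1 (inl v) d]); apply: eq_card => -[u|u].
  rewrite wlI -(cardr V [pred v : V' | wl_same E c L.+1 (inr v) d]); apply: eq_card => -[u|u] //.
have cl : forall u v, wl_same E c L.+1 u v ->
   (u \in [set w | p (hU L w)]) = (v \in [set w | p (hU L w)]).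
  by move=> u v Huv; rewrite !inE (G L u v Huv).
have := classcount r s t H (max_card _) cl => Hc.
transitivity #|[pred u | isl u & u \in [set w | p (hU L w)]]|.
  rewrite -(cardl V' [pred v | p (gnn e x phi agg sigma L v)]); apply: eq_card => -[u|u] //=.
  by rewrite !inE.
rewrite Hc -(cardr V [pred v | p (gnn e' x' phi agg sigma L v)]); apply: eq_card => -[u|u] //=.
by rewrite !inE.
Qed.
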